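(* Let $[\alpha]_{K\times K}\in\mathcal A_{\mathrm{SLS}}$. Then for every subset $S\subseteq[K]$ there exists a p-optimal cyclic partition of $S$, i.e., disjoint cycles $\pi_1,\dots,\pi_n$ with $\bigcup_{l=1}^n\{\pi_l\}=S$ and $\mathcal D_{\Sigma,\mathrm{P\text{-}TIN}}(S)=\Delta_{\pi_1}+\cdots+\Delta_{\pi_n}$.
   Context: $[\alpha]_{K\times K}$ is a matrix of nonnegative reals. SLS regime: $\mathcal A_{\mathrm{SLS}}=\{[\alpha]\in\mathbb R_+^{K\times K}:\ \alpha_{ii}\ge\max(\alpha_{ij},\alpha_{ki},\alpha_{ik}+\alpha_{ji}-\alpha_{jk})\ \forall i,j,k\in[K],\ i\notin\{j,k\}\}$. Cycles: a cycle $\pi=(i_1\to\cdots\to i_M)$, $M\ge1$, is an ordered list of distinct indices of $[K]$, read cyclically ($i_{M+1}=i_1$); $\{\pi\}=\{i_1,\dots,i_M\}$; $\Pi$ is the set of all cycles; cycles are disjoint if their sets are disjoint; a cyclic partition of $S$ is a collection of disjoint cycles whose sets have union $S$. $\delta_{ij}=\alpha_{ii}-\alpha_{ji}$ ($i\neq j$), $\delta_{ii}=0$; $\Delta_\pi=\sum_{m=1}^M\delta_{i_mi_{m+1}}$ if $M>1$, $\Delta_\pi=\alpha_{i_1i_1}$ if $M=1$. For $S\subseteq[K]$, $\mathcal D_{\mathrm{P\text{-}TIN}}(S)=\{(d_k)_{k\in[K]}\in\mathbb R^K: d_k=0\ (k\notin S),\ d_k\ge0\ (k\in S),\ \sum_{k\in\{\pi\}}d_k\le\Delta_\pi\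 \forall \pi\in\Pi \text{ with } \{\pi\}\subseteq S\}$, and $\mathcal D_{\Sigma,\mathrm{P\text{-}TIN}}(S)=\max_{d\in\mathcal D_{\mathrm{P\text{-}TIN}}(S)}\sum_{k\in S}d_k$. *)

(* Defs.v *)
(* Scalars: an arbitrary real field R (the paper uses the reals;
   the statement is purely order-theoretic/linear, so this is a generalization). *)
From HB Require Import structures.
From mathcomp Require Import all_boot all_order all_algebra.
Set Implicit Arguments. Unset Strict Implicit. Unset Printing Implicit Defensive.
Import Order.TTheory GRing.Theory Num.Theory.
Local Open Scope ring_scope.

Definition in_A_SLS (R : realFieldType) (K : nat) (alpha : 'M[R]_K) : Prop :=
  (forall i j : 'I_K, 0 <= alpha i j) /\
  (forall i j k : 'I_K, i != j -> i != k ->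
     [/\ alpha i j <= alpha i i, alpha k i <= alpha i i
       & alpha i k + alpha j i - alpha j k <= alpha i i]).

Definition delta (R : realFieldType) (K : nat) (alpha : 'M[R]_K) (i j : 'I_K) : R :=
  if i == j then 0 else alpha i i - alpha j i.

(* A cycle pi = (i_1 -> ... -> i_M), M >= 1: a nonempty duplicate-free list of
   indices, read cyclically; its set {pi} is the set of its entries. *)
Definition is_cycle (K : nat) (c : seq 'I_K) : bool := (0 < size c)%N && uniq c.

Definition Delta (R : realFieldType) (K : nat) (alpha : 'M[R]_K) (c : seq 'I_K) : R :=
  match c with
  | [:: i] => alpha i i
  | _ => \sum_(i <- c) delta alpha i (next c i)
  end.

Definition in_D_PTIN (R : realFieldType) (K : nat) (alpha : 'M[R]_K)
    (S : {set 'I_K}) (d : 'I_K -> R) : Prop :=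
  [/\ forall k, k \notin S -> d k = 0,
      forall k, k \in S -> 0 <= d k
    & forall c : seq 'I_K, is_cycle c -> {subset c <= S} ->
        \sum_(k <- c) d k <= Delta alpha c].

(* v = D_{Sigma,P-TIN}(S) = max_{d in D_{P-TIN}(S)} sum_{k in S} d_k :
   the maximum is attained and equals v. *)
Definition is_DSigma_PTIN (R : realFieldType) (K : nat) (alpha : 'M[R]_K)
    (S : {set 'I_K}) (v : R) : Prop :=
  (exists2 d, in_D_PTIN alpha S d & \sum_(k in S) d k = v) /\
  (forall d, in_D_PTIN alpha S d -> \sum_(k in S) d k <= v).

(* Disjointness of the (nonempty, duplicate-free) cycles in
   the collection is expressed as: the concatenation has no repetitions. *)
Definition cyclic_partition (K : nat) (S : {set 'I_K}) (P : seq (seq 'I_K)) : Prop :=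
  [/\ all (@is_cycle K) P, uniq (flatten P) & S = [set k | k \in flatten P]].

(* Main.v *)
Require Import Defs.
From HB Require Import structures.
From mathcomp Require Import all_boot all_order all_algebra.
From mathcomp Require Import fingroup perm.
From mathcomp Require Import lra.
Set Implicit Arguments. Unset Strict Implicit. Unset Printing Implicit Defensive.
Import Order.TTheory GRing.Theory Num.Theory.
Local Open Scope ring_scope.

Section Psum.
Variables (T : eqType) (R : realFieldType) (f : T -> T -> R).

Fixpoint psum (x : T) (s : seq T) : R :=
  if s is y :: s' then f x y + psum y s' else 0.

Lemma psum_rcons x s y : psum x (rcons s y) = psum x s + f (last x s) y.
Proof. by elim: s x => [|z s IH] x /=; rewrite ?addr0 ?add0r // IH addrA. Qed.

Lemma psum_cat x s1 s2 : psum x (s1 ++ s2) = psum x s1 + psum (last x s1) s2.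
Proof. by elim: s1 x => [|z s IH] x /=; rewrite ?add0r // IH addrA. Qed.

Lemma psum_path (g : T -> T) x s : path (frel g) x s ->
  psum x s = \sum_(z <- belast x s) f z (g z).
Proof.
elim: s x => [|y s IH] x /=; first by rewrite big_nil.
by case/andP => /eqP <- /IH ->; rewrite big_cons.
Qed.

Definition pw (p : seq T) : R := if p is h :: r then psum h r else 0.

Lemma pw_cat p1 j p2 : pw (p1 ++ j :: p2) = pw (rcons p1 j) + psum j p2.
Proof.
case: p1 => [|h r] /=; first by rewrite add0r.
by rewrite psum_cat /= psum_rcons addrA.
Qed.

End Psum.
Section Main.
Variables (R : realFieldType) (K : nat) (alpha : 'M[R]_K) (S : {set 'I_K}).

Definition W (j i : 'I_K) : R := if j == i then 0 else alpha j i.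
Definition Fc (s : {perm 'I_K}) : R := \sum_(i in S) W (s i) i.

Variable (sg : {perm 'I_K}).
Hypothesis sgS : perm_on S sg.
Hypothesis sgmax : forall t, perm_on S t -> Fc t <= Fc sg.

Definition cc (k j : 'I_K) : R := W k ((sg^-1)%g k) - W j ((sg^-1)%g k).

Lemma next_out (L : seq 'I_K) x : x \notin L -> next L x = x.
Proof. by move=> xL; rewrite next_nth (negbTE xL). Qed.

Lemma sum_outS (G : 'I_K -> R) : (forall i, i \notin S -> G i = 0) ->
  \sum_(i in S) G i = \sum_i G i.
Proof.
move=> H; rewrite [RHS](bigID (fun i => i \in S)) /= [X in _ + X]big1 ?addr0 //.
Qed.

Lemma sum_seq_all (L : seq 'I_K) (G : 'I_K -> R) : uniq L ->
  (forall i, i \notin L -> G i = 0) -> \sum_(i <- L) G i = \sum_i G i.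
Proof.
move=> UL H; rewrite big_uniq //.
rewrite [RHS](bigID (fun i => i \in L)) /= [X in _ + X]big1 ?addr0 //.
Qed.

Lemma exch L : uniq L -> {subset L <= S} ->
  0 <= \sum_(y <- L) cc y (next L y).
Proof.
move=> UL LS.
pose nx := perm (can_inj (prev_next UL)).
have nxS : perm_on S nx.
  apply/subsetP => x; rewrite inE permE; apply: contraR => xS.
  by rewrite next_out ?eqxx //; apply: contra xS; apply: LS.
have := sgmax (perm_onM sgS nxS); rewrite /Fc -subr_ge0 -sumrB.
rewrite sum_outS; last first.
  move=> i iS; rewrite permM permE (out_perm sgS iS) next_out ?subrr //.
  by apply: contra iS; apply: LS.
rewrite (reindex_inj (@perm_inj _ (sg^-1)%g)) /=.
rewrite (sum_seq_all UL); last by move=> y yL; rewrite /cc next_out // subrr.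
congr (0 <= _); apply: eq_bigr => y _.
by rewrite permM permKV /cc /nx permE.
Qed.


Fixpoint allseq (n : nat) : seq (seq 'I_K) :=
  if n is n'.+1 then [::] :: [seq y :: r | y <- enum 'I_K, r <- allseq n']
  else [:: [::]].

Lemma mem_allseq n p : (size p <= n)%N -> p \in allseq n.
Proof.
elim: n p => [|n IH] [|y r] //= Hs; rewrite inE /=.
by apply: (allpairs_f (fun y r => y :: r)); rewrite ?mem_enum // IH.
Qed.

Definition cand (x : 'I_K) (p : seq 'I_K) : bool :=
  [&& p != [::], uniq p, all (fun z => z \in S) p & last x p == x].

Definition minf (s : seq (seq 'I_K)) : R :=
  foldr (fun p m => Num.min (pw cc p) m) 0 s.

Lemma minf_le s p : p \in s -> minf s <= pw cc p.
Proof.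
elim: s => [|a s IH] //=; rewrite inE => /orP [/eqP ->|/IH H].
  by rewrite ge_min lexx.
by rewrite ge_min H orbT.
Qed.

Lemma minf_le0 s : minf s <= 0.
Proof. by elim: s => [|a s IH] //=; rewrite ge_min IH orbT. Qed.

Lemma minf_att s : minf s = 0 \/ exists2 p, p \in s & minf s = pw cc p.
Proof.
elim: s => [|a s IH] /=; first by left.
case: (leP (pw cc a) (minf s)) => H.
  by right; exists a; rewrite ?mem_head.
case: IH => [->|[p ps ->]]; first by left.
by right; exists p; rewrite // inE ps orbT.
Qed.

Definition q (x : 'I_K) : R := minf [seq p <- allseq K | cand x p].

Lemma q_le x p : cand x p -> q x <= pw cc p.
Proof.
move=> cp; apply: minf_le; rewrite mem_filter cp mem_allseq //.
case/and4P: cp => _ up _ _.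
by rewrite -(card_uniqP up) -[X in (_ <= X)%N]card_ord max_card.
Qed.

Lemma q_le0 x : q x <= 0.
Proof. exact: minf_le0. Qed.

Lemma q_att x : x \in S -> exists p, cand x p /\ q x = pw cc p.
Proof.
move=> xS; case: (minf_att [seq p <- allseq K | cand x p]) => [H|[p]].
  by exists [:: x]; rewrite /q H /cand /= xS eqxx.
by rewrite mem_filter => /andP [cp _] H; exists p.
Qed.

Lemma cyc a l : uniq (a :: l) -> {subset (a :: l) <= S} ->
  0 <= psum cc a l + cc (last a l) a.
Proof.
move=> UL LS; rewrite -psum_rcons.
have := cycle_next UL; rewrite [fcycle _ _]/= => /psum_path ->.
by rewrite belast_rcons; apply: exch.
Qed.

Lemma qi k j : k \in S -> j \in S -> q j <= q k + cc k j.
Proof.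
move=> kS jS; have [p [cp ->]] := q_att kS.
case/and4P: (cp) => pn up pS /eqP lp.
case: (boolP (j \in p)) => jp.
  case/splitPr: jp up pS lp => p1 p2 up pS lp.
  have [u1 hj u2] : [/\ uniq p1, ~~ has (mem p1) (j :: p2) & uniq (j :: p2)].
    by apply/and3P; rewrite -cat_uniq.
  have jp1 : j \notin p1 by apply: contra hj => jp1; rewrite /= jp1.
  move: pS; rewrite all_cat /= => /and3P [s1 sj s2].
  have c1 : cand j (rcons p1 j).
    rewrite /cand last_rcons eqxx rcons_uniq jp1 u1 all_rcons sj s1 !andbT.
    by case: (p1).
  apply: le_trans (q_le c1) _.
  rewrite last_cat /= in lp.
  rewrite pw_cat -addrA lerDl -lp; apply: cyc => // z.
  by rewrite inE => /orP [/eqP ->|]; [|move/allP: s2; apply].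
have c2 : cand j (rcons p j).
  by rewrite /cand last_rcons eqxx rcons_uniq jp up all_rcons jS pS !andbT; case: (p).
apply: le_trans (q_le c2) _.
by case: p pn lp {cp up pS jp c2} => [|h r] //= _ lp; rewrite psum_rcons lp.
Qed.

Lemma qii x : x \in S -> 0 <= q x \/ exists k, [/\ k != x, k \in S & q k + cc k x <= q x].
Proof.
move=> xS; have [p [cp ->]] := q_att xS.
case/and4P: (cp) => pn up pS /eqP lp.
case/lastP: p pn up pS lp {cp} => [|p' y] // _ up pS.
rewrite last_rcons => yx; subst y.
case: p' up pS => [|h r] up pS; first by left.
right; exists (last h r); split.
- move: up; rewrite rcons_uniq => /andP [xn _]; apply: contraNneq xn => <-.
  exact: mem_last.
- move: pS; rewrite all_rcons => /andP [_ /allP]; apply; exact: mem_last.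
move: up pS; rewrite rcons_uniq all_rcons => /andP [_ up] /andP [_ pS].
have c : cand (last h r) (h :: r) by rewrite /cand up pS eqxx.
by rewrite /= psum_rcons lerD2r; exact: (q_le c).
Qed.


Hypothesis HA : in_A_SLS alpha.

Lemma a_ge0 i j : 0 <= alpha i j.
Proof. by case: HA. Qed.

Lemma a_col k i : k != i -> alpha k i <= alpha i i.
Proof. by case: HA => _ H ki; case: (H i k k); rewrite // eq_sym. Qed.

Lemma a_sls i j k : i != j -> i != k -> alpha i k + alpha j i - alpha j k <= alpha i i.
Proof. by case: HA => _ H ij ik; case: (H i j k). Qed.

Lemma Wne j i : j != i -> W j i = alpha j i.
Proof. by rewrite /W => /negbTE ->. Qed.

Lemma Wii i : W i i = 0.
Proof. by rewrite /W eqxx. Qed.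

Definition e (i : 'I_K) : R := q (sg i) + W (sg i) i - q i.

Lemma e_lb i j : i \in S -> j \in S -> q j + W j i - q i <= e i.
Proof.
move=> iS jS; rewrite /e lerD2r.
have := qi (j:=j) (k:=sg i); rewrite (perm_closed _ sgS) iS jS /cc permK => /(_ isT isT) H.
lra.
Qed.

Lemma e_ge0 i : i \in S -> 0 <= e i.
Proof. by move=> iS; have := e_lb iS iS; rewrite Wii addr0 subrr. Qed.

Lemma sgK' i : (sg^-1)%g (sg i) = i.
Proof. by rewrite permK. Qed.

Lemma e_le i : i \in S -> e i <= alpha i i.
Proof.
move=> iS; rewrite /e.
have hS : sg i \in S by rewrite (perm_closed _ sgS).
case: (eqVneq (sg i) i) => [->|nf]; first by rewrite Wii addr0 subrr a_ge0.
set h := sg i in hS nf *.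
rewrite Wne //.
have ih : i != h by rewrite eq_sym.
case: (eqVneq (sg h) i) => [two|ntwo].
  case: (qii iS) => [qi0|[k [ki kS Hk]]].
    have := q_le0 h; have := a_col nf; lra.
  have hi : (sg^-1)%g h = i by rewrite /h permK.
  case: (eqVneq k h) => [kh|kh].
    move: Hk; rewrite /cc kh hi Wii Wne // subr0.
    have := a_ge0 i i; lra.
  set m := (sg^-1)%g k.
  have mi : i != m by apply: contra kh => /eqP im; apply/eqP;
    rewrite /h im /m permKV.
  have mh : h != m by apply: contra ki => /eqP hm; apply/eqP;
    rewrite -two hm /m permKV.
  have E1 : W i m = alpha i m by rewrite Wne.
  have E2 : W h m = alpha h m by rewrite Wne.
  have H2 := qi kS hS; rewrite /cc -/m E2 in H2; rewrite /cc -/m E1 in Hk.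
  have := a_sls ih mi; lra.
have H2 := qi iS hS; rewrite /cc in H2.
set m := (sg^-1)%g i in H2.
have mi : i != m by apply: contra nf => /eqP im; apply/eqP; rewrite /h {1}im /m permKV.
have mh : h != m by apply: contra ntwo => /eqP hm; apply/eqP; rewrite hm /m permKV.
have E1 : W i m = alpha i m by rewrite Wne.
have E2 : W h m = alpha h m by rewrite Wne.
rewrite E1 E2 in H2.
have := a_sls ih mi; lra.
Qed.


Definition d (i : 'I_K) : R := if i \in S then alpha i i - e i else 0.

Lemma next_neq (c : seq 'I_K) x : uniq c -> (1 < size c)%N -> x \in c ->
  next c x != x.
Proof.
move=> Uc sc xc; case/rot_to: xc => n c' Hr.
rewrite -(next_rot n Uc) Hr.
have : uniq (x :: c') by rewrite -Hr rot_uniq.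
have : (1 < size (x :: c'))%N by rewrite -Hr size_rot.
case: c' {Hr} => [|y c'] //= _ /andP [xn _].
rewrite eqxx; apply: contraNneq xn => ->; by rewrite inE eqxx.
Qed.

Lemma sum_next (c : seq 'I_K) (G : 'I_K -> R) : uniq c ->
  \sum_(k <- c) G (next c k) = \sum_(k <- c) G k.
Proof.
move=> Uc.
have pe : perm_eq (map (next c) c) c.
  apply: uniq_perm => //; first by rewrite map_inj_uniq //; exact: can_inj (prev_next Uc).
  move=> x; apply/mapP/idP => [[y yc ->]|xc]; first by rewrite mem_next.
  by exists (prev c x); rewrite ?mem_prev ?next_prev.
by rewrite [RHS](perm_big _ (etrans (perm_sym _ _) pe)) big_map.
Qed.

Lemma d_cyc c : is_cycle c -> {subset c <= S} -> \sum_(k <- c) d k <= Delta alpha c.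
Proof.
case/andP => sc Uc cS.
have dE : forall k, k \in c -> d k = alpha k k - e k by move=> k kc; rewrite /d cS.
case: c sc Uc cS dE => [|a [|b l]] // _ Uc cS dE.
  rewrite big_seq1 /= dE ?mem_head //; have := e_ge0 (cS a (mem_head _ _)); lra.
set c := a :: b :: l in Uc cS dE *.
have -> : Delta alpha c = \sum_(i <- c) delta alpha i (next c i) by [].
have H : \sum_(k <- c) d k <=
    \sum_(k <- c) ((alpha k k - W (next c k) k) + (q k - q (next c k))).
  rewrite big_seq [X in _ <= X]big_seq; apply: ler_sum => k kc.
  rewrite dE //; have := e_lb (cS k kc) (cS _ (etrans (mem_next c k) kc)); lra.
apply: le_trans H _.
rewrite big_split [X in _ + X <= _]sumrB (sum_next q Uc) subrr addr0.
rewrite le_eqVlt; apply/orP; left; apply/eqP.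
rewrite big_seq [RHS]big_seq; apply: eq_bigr => k kc.
have nk : next c k != k by apply: next_neq.
by rewrite /delta eq_sym (negbTE nk) Wne.
Qed.

Lemma sum_d : \sum_(k in S) d k = \sum_(k in S) (alpha k k - W (sg k) k).
Proof.
rewrite (eq_bigr (fun k => (alpha k k - W (sg k) k) - (q (sg k) - q k))); last first.
  by move=> k kS; rewrite /d kS /e; lra.
rewrite sumrB [X in _ - X]sum_outS; last first.
  by move=> k kS; rewrite (out_perm sgS kS) subrr.
have -> : \sum_i (q (sg i) - q i) = 0.
  by rewrite sumrB [X in _ - X](reindex_inj (@perm_inj _ sg)) subrr.
by rewrite subr0.
Qed.

Definition P : seq (seq 'I_K) :=
  [seq fingraph.orbit sg x | x <- [seq x <- enum S | froots sg x]].

Lemma fcS x y : fconnect sg x y -> (x \in S) = (y \in S).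
Proof.
move=> H; apply: (fconnect_invariant (k := fun z => z \in S)) H => z /=.
by rewrite (perm_closed _ sgS) eqxx.
Qed.

Lemma P_cycle : all (@is_cycle K) P.
Proof.
apply/allP => c /mapP [x _ ->].
by rewrite /is_cycle fingraph.size_orbit fingraph.order_gt0 orbit_uniq.
Qed.

Lemma csym : connect_sym (frel sg).
Proof. exact: fconnect_sym (@perm_inj _ sg). Qed.

Lemma P_flat_uniq : uniq (flatten P).
Proof.
rewrite /P; have : uniq [seq x <- enum S | froots sg x] by rewrite filter_uniq ?enum_uniq.
have : all (froots sg) [seq x <- enum S | froots sg x] by apply: filter_all.
elim: [seq x <- enum S | froots sg x] => [|x xs IH] //= /andP [rx rxs] /andP [xn Uxs].
rewrite cat_uniq orbit_uniq IH // andbT.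
apply/hasPn => y /flattenP [c /mapP [x' x'xs ->] yx'].
apply: contra xn => yx.
have rx' : froots sg x' by move/allP: rxs; apply.
rewrite -fconnect_orbit in yx; rewrite -fconnect_orbit in yx'.
have E : x = x'.
  rewrite -(eqP rx) -(eqP rx'); apply/eqP; rewrite root_connect; last exact: csym.
  by apply: connect_trans yx _; rewrite csym.
by rewrite E.
Qed.

Lemma P_mem y : (y \in flatten P) = (y \in S).
Proof.
apply/flattenP/idP => [[c /mapP [x] ] |yS].
  rewrite mem_filter mem_enum => /andP [_ xS] -> yx.
  by rewrite -(@fcS x y) // fconnect_orbit.
set r := froot sg y.
have yr : fconnect sg y r by apply: connect_root.
exists (fingraph.orbit sg r); last by rewrite -fconnect_orbit csym.
apply: map_f; rewrite mem_filter mem_enum -(fcS yr) yS andbT.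
exact: roots_root csym y.
Qed.

Lemma sum_flatten (L : seq (seq 'I_K)) (G : 'I_K -> R) :
  \sum_(c <- L) \sum_(y <- c) G y = \sum_(y <- flatten L) G y.
Proof. by elim: L => [|c L IH] /=; rewrite ?big_nil // big_cons big_cat IH. Qed.

Lemma P_sum (G : 'I_K -> R) : \sum_(c <- P) \sum_(y <- c) G y = \sum_(y in S) G y.
Proof.
rewrite sum_flatten big_uniq ?P_flat_uniq //.
by apply: eq_bigl => y; rewrite P_mem.
Qed.

Lemma Delta_orbit x : Delta alpha (fingraph.orbit sg x) =
  \sum_(y <- fingraph.orbit sg x) (alpha y y - W (sg y) y).
Proof.
have cyc := cycle_orbit (@perm_inj _ sg) x.
have nE : forall y, y \in fingraph.orbit sg x -> next (fingraph.orbit sg x) y = sg y.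
  by move=> y; apply: nextE.
have hom : forall y, y \in fingraph.orbit sg x -> sg y \in fingraph.orbit sg x.
  by move=> y; apply: fingraph.mem_orbit.
move: nE hom (orbit_uniq sg x) (in_orbit sg x).
case: (fingraph.orbit sg x) => [|a [|b l]] // nE hom Uc _.
  have : sg a \in [:: a] by apply: hom; rewrite mem_head.
  by rewrite inE => /eqP sa; rewrite big_seq1 /= sa Wii subr0.
set c := a :: b :: l in nE hom Uc *.
have -> : Delta alpha c = \sum_(i <- c) delta alpha i (next c i) by [].
rewrite big_seq [RHS]big_seq; apply: eq_bigr => k kc.
have nk : next c k != k by apply: next_neq.
by rewrite /delta eq_sym (negbTE nk) Wne // -nE.
Qed.

End Main.

Lemma exmax (T : finType) (R : realFieldType) (Pr : pred T) (F : T -> R) x0 :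
  Pr x0 -> exists x, Pr x /\ forall y, Pr y -> F y <= F x.
Proof.
move=> Px0.
suff [x [Px Hx]] : exists x, Pr x /\ forall y, y \in enum T -> Pr y -> F y <= F x.
  by exists x; split => // y; apply: Hx; rewrite mem_enum.
elim: (enum T) => [|a s [x [Px Hx]]]; first by exists x0.
case: (boolP (Pr a)) => Pa; last first.
  exists x; split => // y; rewrite inE => /orP [/eqP -> Pa'|ys]; last exact: Hx.
  by rewrite Pa' in Pa.
case: (leP (F x) (F a)) => H.
  exists a; split => // y; rewrite inE => /orP [/eqP -> //|ys Py].
  exact: le_trans (Hx _ ys Py) H.
exists x; split => // y; rewrite inE => /orP [/eqP -> _|]; last exact: Hx.
exact: ltW.
Qed.

Theorem theorem5 (R : realFieldType) (K : nat) (alpha : 'M[R]_K) :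
  in_A_SLS alpha ->
  forall S : {set 'I_K},
    exists P : seq (seq 'I_K),
      cyclic_partition S P /\
      is_DSigma_PTIN alpha S (\sum_(c <- P) Delta alpha c).
Proof.
move=> HA S.
have [sg [sgS sgmax]] := @exmax _ _ (fun s : {perm 'I_K} => perm_on S s)
  (Fc alpha S) 1%g (perm_on1 S).
exists (P S sg).
have PS : forall c, c \in P S sg -> is_cycle c /\ {subset c <= S}.
  move=> c cP; split; first by move/allP: (P_cycle S sg); apply.
  by move=> y yc; rewrite -(P_mem sgS); apply/flattenP; exists c.
have Hval : \sum_(c <- P S sg) Delta alpha c =
    \sum_(k in S) (alpha k k - W alpha (sg k) k).
  rewrite -(P_sum sgS); rewrite big_seq [RHS]big_seq; apply: eq_bigr => c.
  by case/mapP => x _ ->; rewrite Delta_orbit.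
split.
  split; [exact: P_cycle | exact: P_flat_uniq |].
  by apply/setP => y; rewrite inE (P_mem sgS).
split.
  exists (d alpha S sg).
    split.
    - by move=> k kS; rewrite /d (negbTE kS).
    - by move=> k kS; rewrite /d kS subr_ge0; apply: e_le.
    - move=> c cc cS; exact: d_cyc.
  by rewrite Hval; apply: sum_d.
move=> d' [_ _ Hd'].
rewrite -(P_sum sgS) big_seq [X in _ <= X]big_seq; apply: ler_sum => c cP.
by case: (PS c cP) => c1 c2; apply: Hd'.
Qed.
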